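(* Let $M$ be a three-holed sphere with $\pi_1(M)=\langle A,B,C: ABC=I\rangle$, where $A,B,C$ represent the three boundary components. For $\rho\in\operatorname{Hom}(\pi_1(M),\mathrm{SU}(2))$ write $a=\operatorname{tr}\rho(A)$, $b=\operatorname{tr}\rho(B)$, $c=\operatorname{tr}\rho(C)$. Then: (1) $\rho$ is $\mathrm{Spin}(2)$ if and only if $a^2+b^2+c^2-abc-4=0$; (2) $\rho$ is $\mathrm{Pin}(2)$ and not $\mathrm{Spin}(2)$ if and only if $a^2+b^2+c^2-abc-4\neq0$ and at least two of the three numbers $\operatorname{tr}\rho(A)$, $\operatorname{tr}\rho(B)$, $\operatorname{tr}\rho(AB)$ are zero.
   Context: Let $p:\mathrm{SU}(2)\to\mathrm{SO}(3)$ be the double cover. $\mathrm{Pin}(2)=p^{-1}(\mathrm{O}(2))$ for a subgroup $\mathrm{O}(2)\subset\mathrm{SO}(3)$, and $\mathrm{Spin}(2)$ is its identity component (a maximal torus of $\mathrm{SU}(2)$). For a subgroup $G\subset\mathrm{SU}(2)$, a representation $\rho$ is said to be $G$ if $\rho(\pi_1(M))$ is contained in some subgroup of $\mathrm{SU}(2)$ isomorphic to (i.e. a conjugate copy of) $G$, and not $G$ if it is contained in no such copy. *)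

(* Defs.v *)
From mathcomp Require Import all_boot all_algebra.
From mathcomp Require Import reals.
From mathcomp.real_closed Require Export complex.
Set Implicit Arguments. Unset Strict Implicit. Unset Printing Implicit Defensive.
Import GRing.Theory Num.Theory.
Local Open Scope ring_scope.
Local Open Scope complex_scope.

Section SU2.
Variable R : realType.
Notation C := (R[i]).

Definition adjmx (M : 'M[C]_2) : 'M[C]_2 := (map_mx conjc M)^T.

Definition SU2 (M : 'M[C]_2) : Prop := M *m adjmx M = 1%:M /\ \det M = 1.

(* The standard Spin(2): the diagonal maximal torus {diag(z, z^* ) : |z| = 1} *)
Definition Spin2_std (M : 'M[C]_2) : Prop :=
  SU2 M /\ M 0 1 = 0 /\ M 1 0 = 0.

(* The standard Pin(2) = p^{-1}(O(2)) = Spin(2) u j.Spin(2),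
   j.Spin(2) = antidiagonal elements of SU(2) *)
Definition Pin2_std (M : 'M[C]_2) : Prop :=
  Spin2_std M \/ (SU2 M /\ M 0 0 = 0 /\ M 1 1 = 0).

Definition conj_copy (G : 'M[C]_2 -> Prop) (g : 'M[C]_2) (M : 'M[C]_2) : Prop :=
  exists N, G N /\ M = g *m N *m invmx g.

(* the image rho(pi_1(M)): subgroup of SU(2) generated by
   rho(A) = X, rho(B) = Y, rho(C) = Z *)
Inductive in_image (X Y Z : 'M[C]_2) : 'M[C]_2 -> Prop :=
| img_A : in_image X Y Z X
| img_B : in_image X Y Z Y
| img_C : in_image X Y Z Z
| img_1 : in_image X Y Z 1%:M
| img_mul M N : in_image X Y Z M -> in_image X Y Z N -> in_image X Y Z (M *m N)
| img_inv M : in_image X Y Z M -> in_image X Y Z (invmx M).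

(* rho is G: its image lies in some conjugate copy of G in SU(2) *)
Definition rep_is (G : 'M[C]_2 -> Prop) (X Y Z : 'M[C]_2) : Prop :=
  exists g, SU2 g /\ forall M, in_image X Y Z M -> conj_copy G g M.

End SU2.

(* Main.v *)
Require Import Defs.
From mathcomp Require Import all_boot all_algebra.
From mathcomp Require Import reals.
From mathcomp.real_closed Require Import complex.
From mathcomp Require Import ring lra.
From mathcomp Require Import order.
Import Order.TTheory GRing.Theory Num.Theory.
Local Open Scope ring_scope.
Set Implicit Arguments. Unset Strict Implicit.

Section Quat.
Variable R : realType.
Notation C := (R[i]).

Record quat := Quat { q0 : R; q1 : R; q2 : R; q3 : R }.

Definition qmul (p q : quat) : quat :=
  Quat (q0 p * q0 q - q1 p * q1 q - q2 p * q2 q - q3 p * q3 q)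
       (q0 p * q1 q + q1 p * q0 q + q2 p * q3 q - q3 p * q2 q)
       (q0 p * q2 q - q1 p * q3 q + q2 p * q0 q + q3 p * q1 q)
       (q0 p * q3 q + q1 p * q2 q - q2 p * q1 q + q3 p * q0 q).
Definition qconj p := Quat (q0 p) (- q1 p) (- q2 p) (- q3 p).
Definition qn2 p := q0 p ^+ 2 + q1 p ^+ 2 + q2 p ^+ 2 + q3 p ^+ 2.
Definition qone := Quat 1 0 0 0.

Lemma qmul_conj p : qn2 p = 1 -> qmul p (qconj p) = qone.
Proof.
case: p => a b c d; rewrite /qn2 /= => H.
rewrite /qmul /qconj /qone /=; congr Quat; try ring.
by rewrite -H; ring.
Qed.

Lemma qconj_mul p : qn2 p = 1 -> qmul (qconj p) p = qone.
Proof.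
case: p => a b c d; rewrite /qn2 /= => H.
rewrite /qmul /qconj /qone /=; congr Quat; try ring.
by rewrite -H; ring.
Qed.

Definition qS p := q2 p = 0 /\ q3 p = 0.
Definition qA p := q0 p = 0 /\ q1 p = 0.
Definition qP p := qS p \/ qA p.
Definition cg g p := qmul (qmul (qconj g) p) g.
Definition crossz (x y : quat) := 
  [/\ q2 x * q3 y - q3 x * q2 y = 0, q3 x * q1 y - q1 x * q3 y = 0 &
      q1 x * q2 y - q2 x * q1 y = 0].

Lemma qmulA p q r : qmul p (qmul q r) = qmul (qmul p q) r.
Proof. case: p q r => [a b c d] [e f g h] [i j k l]; rewrite /qmul /=; congr Quat; ring. Qed.
Lemma qmul1 p : qmul p qone = p.
Proof. case: p => a b c d; rewrite /qmul /=; congr Quat; ring. Qed.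
Lemma q1mul p : qmul qone p = p.
Proof. case: p => a b c d; rewrite /qmul /=; congr Quat; ring. Qed.
Lemma qn2_mul p q : qn2 (qmul p q) = qn2 p * qn2 q.
Proof. case: p q => [a b c d] [e f g h]; rewrite /qn2 /qmul /=; ring. Qed.
Lemma qn2_conj p : qn2 (qconj p) = qn2 p.
Proof. case: p => a b c d; rewrite /qn2 /=; ring. Qed.
Lemma qconjK p : qconj (qconj p) = p.
Proof. by case: p => a b c d; rewrite /qconj /= !opprK. Qed.
Lemma qconj_mulr p q : qconj (qmul p q) = qmul (qconj q) (qconj p).
Proof. case: p q => [a b c d] [e f g h]; rewrite /qmul /qconj /=; congr Quat; ring. Qed.

Lemma cg_mul g p q : qn2 g = 1 -> cg g (qmul p q) = qmul (cg g p) (cg g q).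
Proof.
move=> H; rewrite /cg; symmetry.
transitivity (qmul (qmul (qconj g) p) (qmul (qmul g (qconj g)) (qmul q g))).
  by rewrite !qmulA.
by rewrite qmul_conj // q1mul !qmulA.
Qed.

Lemma cg_conj g p : cg g (qconj p) = qconj (cg g p).
Proof. by rewrite /cg !qconj_mulr qconjK qmulA. Qed.

Lemma cg_inv g x : qn2 g = 1 -> qmul (qmul g (cg g x)) (qconj g) = x.
Proof.
move=> H; by rewrite /cg !qmulA qmul_conj // q1mul -qmulA qmul_conj // qmul1.
Qed.

Lemma cg_inj g x y : qn2 g = 1 -> cg g x = cg g y -> x = y.
Proof. by move=> H E; rewrite -(cg_inv x H) E cg_inv. Qed.

Lemma cg_n2 g x : qn2 g = 1 -> qn2 (cg g x) = qn2 x.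
Proof. by move=> H; rewrite /cg !qn2_mul qn2_conj H mul1r mulr1. Qed.

Lemma cg_0 g x : qn2 g = 1 -> q0 (cg g x) = q0 x.
Proof.
move=> H; transitivity (qn2 g * q0 x); last by rewrite H mul1r.
case: g {H} => a b c d; case: x => e f h i; rewrite /qn2 /cg /=; ring.
Qed.

Definition dot3 (x y : quat) := q1 x * q1 y + q2 x * q2 y + q3 x * q3 y.

Lemma cg_dot g x y : qn2 g = 1 -> dot3 (cg g x) (cg g y) = dot3 x y.
Proof.
move=> H; transitivity (qn2 g ^+ 2 * dot3 x y); last by rewrite H expr1n mul1r.
case: g {H} => a b c d; case: x => e f h i; case: y => j k l m; rewrite /qn2 /cg /dot3 /=; ring.
Qed.

Lemma qS_comm u v : qS u -> qS v -> qmul u v = qmul v u.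
Proof.
case: u v => [a b c d] [e f g h]; rewrite /qS /= => -[-> ->] [-> ->].
rewrite /qmul /=; congr Quat; ring.
Qed.


Lemma cg_one n : cg qone n = n.
Proof. by rewrite /cg (_ : qconj qone = qone) ?q1mul ?qmul1 // /qconj /= oppr0. Qed.

Lemma qn2_one : qn2 qone = 1 :> R.
Proof. by rewrite /qn2 /=; ring. Qed.

Definition qscale (c : R) p := Quat (c * q0 p) (c * q1 p) (c * q2 p) (c * q3 p).

Lemma cg_scale c q p : cg (qscale c q) p = qscale (c ^+ 2) (cg q p).
Proof. case: q p => [a b d e] [f g h i]; rewrite /cg /qscale /qmul /qconj /=; congr Quat; ring. Qed.

Lemma qn2_scale c q : qn2 (qscale c q) = c ^+ 2 * qn2 q.
Proof. case: q => a b d e; rewrite /qn2 /=; ring. Qed.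

Lemma qn2_ge0 q : 0 <= qn2 q.
Proof. case: q => a b d e; rewrite /qn2 /=; nra. Qed.

Lemma align n : q0 n = 0 -> exists g, qn2 g = 1 /\ qS (cg g n).
Proof.
case: n => n0 n1 n2 n3 /= ->.
have [/andP [/eqP h2 /eqP h3] | hn] := boolP ((n2 == 0) && (n3 == 0)).
  by exists qone; rewrite qn2_one cg_one /qS /= h2 h3.
have hpos : 0 < n2 ^+ 2 + n3 ^+ 2.
  case/nandP: hn => h.
    have : 0 < n2 ^+ 2 by rewrite lt0r sqrf_eq0 h sqr_ge0.
    by have := sqr_ge0 n3; lra.
  have : 0 < n3 ^+ 2 by rewrite lt0r sqrf_eq0 h sqr_ge0.
  by have := sqr_ge0 n2; lra.
set N := n1 ^+ 2 + n2 ^+ 2 + n3 ^+ 2.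
have N0 : 0 <= N by rewrite /N; nra.
set s := Num.sqrt N.
have hs : s ^+ 2 = N by rewrite sqr_sqrtr.
set q := Quat (s + n1) 0 (- n3) n2.
have hq : 0 < qn2 q.
  rewrite /qn2 /= sqrrN (_ : (0:R) ^+ 2 = 0) ?expr2 ?mulr0 //.
  have := sqr_ge0 (s + n1); rewrite expr2 in hpos *; lra.
set m := Num.sqrt (qn2 q).
have hm : m ^+ 2 = qn2 q by rewrite sqr_sqrtr // ltW.
have m0 : m != 0 by rewrite sqrtr_eq0 -ltNge hq.
exists (qscale m^-1 q); split.
  by rewrite qn2_scale -hm exprVn mulVf // expf_neq0.
have h2 : q2 (cg q (Quat 0 n1 n2 n3)) = n2 * (s ^+ 2 - N) by rewrite /N /cg /= ; ring.
have h3 : q3 (cg q (Quat 0 n1 n2 n3)) = n3 * (s ^+ 2 - N) by rewrite /N /cg /= ; ring.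
rewrite hs subrr mulr0 in h2 h3.
rewrite cg_scale; move: h2 h3; move: (cg q _) => [u0 u1 u2 u3] /= -> ->.
by rewrite /qS /= !mulr0.
Qed.


Lemma QS_to x y g : qn2 g = 1 -> qS (cg g x) -> qS (cg g y) -> crossz x y.
Proof.
move=> H hx hy.
have E : qmul x y = qmul y x.
  by apply: (cg_inj H); rewrite !cg_mul // qS_comm.
case: x y E {hx hy} => [a b c d] [e f g' h]; rewrite /qmul /crossz /= => -[_ e1 e2 e3].
by split; lra.
Qed.

Lemma cg2_real g t0 t1 t2 t3 :
  q2 (cg g (Quat t0 t1 t2 t3)) = q2 (cg g (Quat 0 t1 t2 t3)) /\
  q3 (cg g (Quat t0 t1 t2 t3)) = q3 (cg g (Quat 0 t1 t2 t3)).
Proof. case: g => a b c d; rewrite /cg /=; split; ring. Qed.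

Lemma cg2_lin g m t1 t2 t3 :
  q2 (cg g (Quat 0 (m * t1) (m * t2) (m * t3))) = m * q2 (cg g (Quat 0 t1 t2 t3)) /\
  q3 (cg g (Quat 0 (m * t1) (m * t2) (m * t3))) = m * q3 (cg g (Quat 0 t1 t2 t3)).
Proof. case: g => a b c d; rewrite /cg /=; split; ring. Qed.

Lemma QS_of x y : crossz x y -> exists g, qn2 g = 1 /\ qS (cg g x) /\ qS (cg g y).
Proof.
case: x y => [x0 x1 x2 x3] [y0 y1 y2 y3]; rewrite /crossz /= => -[c1 c2 c3].
have [hx | hx] := boolP ((x1 == 0) && (x2 == 0) && (x3 == 0)).
  case/andP: hx => /andP [/eqP e1 /eqP e2] /eqP e3; subst.
  have [g [H [h2 h3]]] := @align (Quat 0 y1 y2 y3) erefl.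
  exists g; split => //; split.
    by rewrite /qS; case: g {H h2 h3} => a b c d; rewrite /cg /=; split; ring.
  by rewrite /qS; case: (cg2_real g y0 y1 y2 y3) => -> ->.
set N := x1 ^+ 2 + x2 ^+ 2 + x3 ^+ 2.
have Nne : N != 0.
  apply: contra hx => /eqP hN.
  have h1 : x1 ^+ 2 = 0 by rewrite /N in hN; nra.
  have h2 : x2 ^+ 2 = 0 by rewrite /N in hN; nra.
  have h3 : x3 ^+ 2 = 0 by rewrite /N in hN; nra.
  by rewrite -(sqrf_eq0 x1) -(sqrf_eq0 x2) -(sqrf_eq0 x3) h1 h2 h3 eqxx.
set d := x1 * y1 + x2 * y2 + x3 * y3.
set mu := d / N.
have hy1 : y1 = mu * x1.
  have e : y1 * N = d * x1.
    transitivity (d * x1 + (x3 * (x3 * y1 - x1 * y3) - x2 * (x1 * y2 - x2 * y1))); first by rewrite /N /d; ring.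
    by rewrite c2 c3; ring.
  by rewrite /mu mulrAC -e mulfK.
have hy2 : y2 = mu * x2.
  have e : y2 * N = d * x2.
    transitivity (d * x2 + (x1 * (x1 * y2 - x2 * y1) - x3 * (x2 * y3 - x3 * y2))); first by rewrite /N /d; ring.
    by rewrite c1 c3; ring.
  by rewrite /mu mulrAC -e mulfK.
have hy3 : y3 = mu * x3.
  have e : y3 * N = d * x3.
    transitivity (d * x3 + (x2 * (x2 * y3 - x3 * y2) - x1 * (x3 * y1 - x1 * y3))); first by rewrite /N /d; ring.
    by rewrite c1 c2; ring.
  by rewrite /mu mulrAC -e mulfK.
have [g [H [h2 h3]]] := @align (Quat 0 x1 x2 x3) erefl.
exists g; split => //; split.
  by rewrite /qS; case: (cg2_real g x0 x1 x2 x3) => -> ->.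
rewrite /qS; case: (cg2_real g y0 y1 y2 y3) => -> ->.
by rewrite hy1 hy2 hy3; case: (cg2_lin g mu x1 x2 x3) => -> ->; rewrite h2 h3 mulr0.
Qed.

Definition kr x y := (2 * q0 x) ^+ 2 + (2 * q0 y) ^+ 2 + (2 * q0 (qmul x y)) ^+ 2
  - (2 * q0 x) * (2 * q0 y) * (2 * q0 (qmul x y)) - 4.

Lemma kr_id x y : kr x y =
  -4 * ((q2 x * q3 y - q3 x * q2 y) ^+ 2 + (q3 x * q1 y - q1 x * q3 y) ^+ 2 +
        (q1 x * q2 y - q2 x * q1 y) ^+ 2)
  - 4 * ((1 - qn2 x) * (q1 y ^+ 2 + q2 y ^+ 2 + q3 y ^+ 2) +
         (1 - qn2 y) * (q1 x ^+ 2 + q2 x ^+ 2 + q3 x ^+ 2) + (1 - qn2 x) * (1 - qn2 y)).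
Proof. case: x y => [a b c d] [e f g h]; rewrite /kr /qn2 /=; ring. Qed.

Lemma kr_iff x y : qn2 x = 1 -> qn2 y = 1 -> (kr x y = 0 <-> crossz x y).
Proof.
move=> hx hy; rewrite kr_id hx hy subrr !mul0r !addr0 mulr0 subr0 /crossz.
move: (q2 x * q3 y - q3 x * q2 y) (q3 x * q1 y - q1 x * q3 y) (q1 x * q2 y - q2 x * q1 y) => u v w.
split.
  move=> h; split; nra.
by case=> -> -> ->; ring.
Qed.

Lemma perp_helper g u n : qn2 g = 1 -> qS (cg g n) -> q0 n = 0 -> qn2 n != 0 ->
  q0 u = 0 -> dot3 u n = 0 -> qA (cg g u).
Proof.
move=> H hS hn0 hn hu0 hd.
have d' : dot3 (cg g u) (cg g n) = 0 by rewrite cg_dot.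
have n' : qn2 (cg g n) = qn2 n by rewrite cg_n2.
have ht0 : q0 (cg g n) = 0 by rewrite cg_0.
split; first by rewrite cg_0.
move: hS d' n' ht0; move: (cg g n) (cg g u) => [t0 t1 t2 t3] [v0 v1 v2 v3].
rewrite /qS /dot3 /qn2 /= => -[-> ->] hd' hn' ht; rewrite ht in hn'.
have t1ne : t1 != 0.
  apply/eqP => t10; move/eqP: hn; apply; rewrite /qn2 -hn' t10; ring.
apply/eqP; rewrite -(mulIr_eq0 _ (mulIf t1ne)).
by apply/eqP; rewrite -hd'; ring.
Qed.

Lemma PA a b : q0 a = 0 -> q0 b = 0 -> ~ crossz a b ->
  exists g, qn2 g = 1 /\ qA (cg g a) /\ qA (cg g b).
Proof.
move=> ha hb hc.
set n := Quat 0 (q2 a * q3 b - q3 a * q2 b) (q3 a * q1 b - q1 a * q3 b) (q1 a * q2 b - q2 a * q1 b).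
have [g [H hS]] := @align n erefl.
have hn : qn2 n != 0.
  apply/negP => /eqP hn; apply: hc; move: hn; rewrite /qn2 /n /crossz /=.
  move: (q2 a * q3 b - q3 a * q2 b) (q3 a * q1 b - q1 a * q3 b) (q1 a * q2 b - q2 a * q1 b) => u v w h.
  split; nra.
exists g; split => //; split; apply: (perp_helper H hS) => //;
  rewrite /dot3 /n /=; ring.
Qed.

Lemma AA_S u v : qA u -> qA v -> qS (qmul (qconj u) v).
Proof. case: u v => [a b c d] [e f g h]; rewrite /qA /qS /qmul /= => -[-> ->] [-> ->]; split; ring. Qed.

Lemma AA_S' u v : qA u -> qA v -> qS (qmul u (qconj v)).
Proof. case: u v => [a b c d] [e f g h]; rewrite /qA /qS /qmul /= => -[-> ->] [-> ->]; split; ring. Qed.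

Lemma cross_back1 x y : q0 x = 0 -> qn2 x = 1 -> crossz x (qmul x y) -> crossz x y.
Proof.
case: x y => [x0 x1 x2 x3] [y0 y1 y2 y3]; rewrite /qn2 /crossz /qmul /= => -> hA [e1 e2 e3].
have hA' : x1 ^+ 2 + x2 ^+ 2 + x3 ^+ 2 = 1 by rewrite -hA; ring.
have f1 := congr1 (fun t => x1 * t) e1; have f2 := congr1 (fun t => x2 * t) e2.
have f3 := congr1 (fun t => x3 * t) e3.
have g1 := congr1 (fun t => x2 * t) e1; have g2 := congr1 (fun t => x3 * t) e2.
have g3 := congr1 (fun t => x1 * t) e3.
have k1 := congr1 (fun t => x3 * t) e1; have k2 := congr1 (fun t => x1 * t) e2.
have k3 := congr1 (fun t => x2 * t) e3.
move: f1 f2 f3 g1 g2 g3 k1 k2 k3 => /= f1 f2 f3 g1 g2 g3 k1 k2 k3.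
rewrite !mulr0 in f1 f2 f3 g1 g2 g3 k1 k2 k3.
have m1 := congr1 (fun t => (x2 * y3 - x3 * y2) * t) hA'.
have m2 := congr1 (fun t => (x3 * y1 - x1 * y3) * t) hA'.
have m3 := congr1 (fun t => (x1 * y2 - x2 * y1) * t) hA'.
move: m1 m2 m3 => /= m1 m2 m3.
split; lra.
Qed.

Lemma cross_back2 x y : q0 y = 0 -> qn2 y = 1 -> crossz y (qmul x y) -> crossz x y.
Proof.
case: x y => [x0 x1 x2 x3] [y0 y1 y2 y3]; rewrite /qn2 /crossz /qmul /= => -> hA [e1 e2 e3].
have hA' : y1 ^+ 2 + y2 ^+ 2 + y3 ^+ 2 = 1 by rewrite -hA; ring.
have f1 := congr1 (fun t => y1 * t) e1; have f2 := congr1 (fun t => y2 * t) e2.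
have f3 := congr1 (fun t => y3 * t) e3.
have g1 := congr1 (fun t => y2 * t) e1; have g2 := congr1 (fun t => y3 * t) e2.
have g3 := congr1 (fun t => y1 * t) e3.
have k1 := congr1 (fun t => y3 * t) e1; have k2 := congr1 (fun t => y1 * t) e2.
have k3 := congr1 (fun t => y2 * t) e3.
move: f1 f2 f3 g1 g2 g3 k1 k2 k3 => /= f1 f2 f3 g1 g2 g3 k1 k2 k3.
rewrite !mulr0 in f1 f2 f3 g1 g2 g3 k1 k2 k3.
have m1 := congr1 (fun t => (x2 * y3 - x3 * y2) * t) hA'.
have m2 := congr1 (fun t => (x3 * y1 - x1 * y3) * t) hA'.
have m3 := congr1 (fun t => (x1 * y2 - x2 * y1) * t) hA'.
move: m1 m2 m3 => /= m1 m2 m3.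
split; lra.
Qed.


Definition two3 x y := (q0 x = 0 /\ q0 y = 0) \/ (q0 x = 0 /\ q0 (qmul x y) = 0) \/
   (q0 y = 0 /\ q0 (qmul x y) = 0).

Lemma QP_to x y g : qn2 g = 1 -> qP (cg g x) -> qP (cg g y) ->
  ~ (qS (cg g x) /\ qS (cg g y)) -> two3 x y.
Proof.
move=> H; rewrite /two3 -(cg_0 x H) -(cg_0 y H) -(cg_0 (qmul x y) H) cg_mul //.
move: (cg g x) (cg g y) => [a b c d] [e f g' h].
rewrite /qP /qS /qA /qmul /= => -[[hc hd] | [ha hb]] [[hg hh] | [he hf]] hn.
- by exfalso; apply: hn.
- by right; right; split => //; rewrite he hf hc hd; ring.
- by right; left; split => //; rewrite ha hb hg hh; ring.
- by left.
Qed.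

Lemma QP_of x y : qn2 x = 1 -> qn2 y = 1 -> ~ crossz x y -> two3 x y ->
  exists g, qn2 g = 1 /\ qP (cg g x) /\ qP (cg g y).
Proof.
move=> hx hy hc [[h1 h2] | [[h1 h2] | [h1 h2]]].
- have [g [H [ha hb]]] := PA h1 h2 hc.
  by exists g; split => //; split; right.
- have hc' : ~ crossz x (qmul x y) by move/(cross_back1 h1 hx).
  have [g [H [ha hb]]] := PA h1 h2 hc'.
  exists g; split => //; split; first by right.
  have -> : y = qmul (qconj x) (qmul x y) by rewrite qmulA qconj_mul // q1mul.
  by left; rewrite cg_mul // cg_conj; apply: AA_S.
- have hc' : ~ crossz y (qmul x y) by move/(cross_back2 h1 hy).
  have [g [H [ha hb]]] := PA h1 h2 hc'.
  exists g; split => //; split; last by right.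
  have -> : x = qmul (qmul x y) (qconj y) by rewrite -qmulA qmul_conj // qmul1.
  by left; rewrite cg_mul // cg_conj; apply: AA_S'.
Qed.


Local Open Scope complex_scope.
Definition Q (p : quat) : 'M[C]_2 := \matrix_(i, j)
  if i == 0 then (if j == 0 then q0 p +i* q1 p else q2 p +i* q3 p)
  else (if j == 0 then (- q2 p) +i* q3 p else q0 p +i* (- q1 p)).

Lemma Q00 p : Q p 0 0 = q0 p +i* q1 p. Proof. by rewrite mxE. Qed.
Lemma Q01 p : Q p 0 1 = q2 p +i* q3 p. Proof. by rewrite mxE. Qed.
Lemma Q10 p : Q p 1 0 = (- q2 p) +i* q3 p. Proof. by rewrite mxE. Qed.
Lemma Q11 p : Q p 1 1 = q0 p +i* (- q1 p). Proof. by rewrite mxE. Qed.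

Lemma ord2 (i : 'I_2) : i = 0 \/ i = 1.
Proof. case: i => [[|[|n]] Hi]; [left|right|by []]; exact: val_inj. Qed.

Lemma mx2_eq (T : Type) (M N : 'M[T]_2) :
  M 0 0 = N 0 0 -> M 0 1 = N 0 1 -> M 1 0 = N 1 0 -> M 1 1 = N 1 1 -> M = N.
Proof.
move=> h00 h01 h10 h11; apply/matrixP => i j.
by case: (ord2 i) => ->; case: (ord2 j) => ->.
Qed.

Lemma mul2E (T : comPzRingType) (M N : 'M[T]_2) i j :
  (M *m N) i j = M i 0 * N 0 j + M i 1 * N 1 j.
Proof.
rewrite mxE !big_ord_recl big_ord0 addr0.
by have -> : lift ord0 ord0 = 1 :> 'I_2 by apply: val_inj.
Qed.

Lemma tr2E (T : comPzRingType) (M : 'M[T]_2) : \tr M = M 0 0 + M 1 1.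
Proof.
rewrite /mxtrace !big_ord_recl big_ord0 addr0.
by have -> : lift ord0 ord0 = 1 :> 'I_2 by apply: val_inj.
Qed.

Lemma Q_mul p q : Q p *m Q q = Q (qmul p q).
Proof.
case: p => a b c d; case: q => e f g h.
apply: mx2_eq; rewrite mul2E !mxE /=; simpc; congr Complex; ring.
Qed.

Lemma tr_Q p : \tr (Q p) = (2 * q0 p)%:C.
Proof. rewrite tr2E !mxE /=; simpc; rewrite /=; congr Complex; ring. Qed.


Lemma det2E (T : comPzRingType) (M : 'M[T]_2) :
  \det M = M 0 0 * M 1 1 - M 0 1 * M 1 0.
Proof.
rewrite (expand_det_row _ 0) !big_ord_recl big_ord0 addr0 /cofactor !det_mx11 !mxE /=.
have -> : lift ord0 ord0 = 1 :> 'I_2 by apply: val_inj.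
rewrite [lift 1 _](_ : _ = 0 :> 'I_2); last by apply: val_inj.
by rewrite /bump /= expr0 expr1 mul1r mulN1r mulrN.
Qed.

Lemma cK (z : C) : conjc (conjc z) = z.
Proof. by case: z => a b; rewrite /= opprK. Qed.
Lemma cM (z w : C) : conjc (z * w) = conjc z * conjc w.
Proof. case: z => a b; case: w => c d; simpc; rewrite /=; congr Complex; ring. Qed.
Lemma cD (z w : C) : conjc (z + w) = conjc z + conjc w.
Proof. case: z => a b; case: w => c d; simpc; rewrite /=; congr Complex; ring. Qed.

Lemma c0 : conjc (0 : C) = 0.
Proof. by rewrite /= oppr0. Qed.

Lemma adjE (M : 'M[C]_2) i j : adjmx M i j = conjc (M j i).
Proof. by rewrite /adjmx !mxE. Qed.

Lemma Q_one : Q qone = 1%:M.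
Proof. by apply: mx2_eq; rewrite !mxE /= ?oppr0 ?opprK ?subrr; reflexivity. Qed.

Lemma Q_inj p q : Q p = Q q -> p = q.
Proof.
case: p => a b c d; case: q => e f g h => E.
have := congr1 (fun M : 'M[C]_2 => M 0 0) E; have := congr1 (fun M : 'M[C]_2 => M 0 1) E.
by rewrite !mxE /= => -[-> ->] [-> ->].
Qed.

Lemma inv_uniq (T : comUnitRingType) n (A B : 'M[T]_n) : A *m B = 1%:M -> invmx A = B.
Proof.
move=> h; have [uA _] := mulmx1_unit h.
by rewrite -[invmx A]mulmx1 -h mulmxA mulVmx // mul1mx.
Qed.

Lemma Q_inv p : qn2 p = 1 -> invmx (Q p) = Q (qconj p).
Proof. by move=> H; apply: inv_uniq; rewrite Q_mul qmul_conj // Q_one. Qed.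

Lemma Q_unit p : qn2 p = 1 -> Q p \in unitmx.
Proof.
move=> H; have h : Q p *m Q (qconj p) = 1%:M by rewrite Q_mul qmul_conj // Q_one.
by have [] := mulmx1_unit h.
Qed.

Lemma Q_SU2 p : qn2 p = 1 -> SU2 (Q p).
Proof.
case: p => a b c d; rewrite /qn2 /= => H; split.
  apply: mx2_eq; rewrite mul2E !adjE !mxE /=; simpc; congr Complex; try ring;
  by rewrite -H; ring.
rewrite det2E !mxE /=; simpc; congr Complex; try ring.
by rewrite -H; ring.
Qed.

Lemma SU2_Q M : SU2 M -> exists p, M = Q p /\ qn2 p = 1.
Proof.
case=> h1 h2.
have e00 := congr1 (fun N : 'M[C]_2 => N 0 0) h1.
have e01 := congr1 (fun N : 'M[C]_2 => N 0 1) h1.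
move: e00 e01; rewrite !mul2E !adjE !mxE /= => e00 e01.
rewrite det2E in h2.
have e01' : (conjc (M 0 0)) * M 1 0 + (conjc (M 0 1)) * M 1 1 = 0.
  move: (congr1 (@conjc _) e01); rewrite cD !cM !cK c0; exact.
have hd : M 1 1 = (conjc (M 0 0)).
  apply/eqP; rewrite -subr_eq0.
  have -> : M 1 1 - (conjc (M 0 0)) = (conjc (M 0 0)) * (M 0 0 * M 1 1 - M 0 1 * M 1 0 - 1)
     - M 1 1 * (M 0 0 * (conjc (M 0 0)) + M 0 1 * (conjc (M 0 1)) - 1)
     + M 0 1 * ((conjc (M 0 0)) * M 1 0 + (conjc (M 0 1)) * M 1 1) :> C by ring.
  by rewrite h2 e00 e01' !subrr !mulr0 subrr addr0.
have hc : M 1 0 = - (conjc (M 0 1)).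
  apply/eqP; rewrite -subr_eq0 opprK.
  have -> : M 1 0 + (conjc (M 0 1)) = M 0 0 * ((conjc (M 0 0)) * M 1 0 + (conjc (M 0 1)) * M 1 1)
     - (conjc (M 0 1)) * (M 0 0 * M 1 1 - M 0 1 * M 1 0 - 1)
     - M 1 0 * (M 0 0 * (conjc (M 0 0)) + M 0 1 * (conjc (M 0 1)) - 1) :> C by ring.
  by rewrite h2 e00 e01' !subrr !mulr0 subrr subr0.
move: e00 hd hc; case E0: (M 0 0) => [a b]; case E1: (M 0 1) => [c d] => e00 hd hc.
exists (Quat a b c d); split.
  apply: mx2_eq; rewrite !mxE /= ?E0 ?E1 ?hd ?hc //; simpc; by [].
move: e00; simpc; move=> [e _]; rewrite /qn2 /= -e; ring.
Qed.


Lemma cplx0 (r : R) : r%:C = 0 <-> r = 0.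
Proof.
split=> [h|->] //.
by move/eqP: h; rewrite eq_complex /= => /andP [/eqP ->].
Qed.

Lemma Spin_Q p : qn2 p = 1 -> (Spin2_std (Q p) <-> qS p).
Proof.
move=> hp; split.
  case=> _ [h01 _]; move: h01; rewrite Q01 => /eqP; rewrite eq_complex /=.
  by case/andP => /eqP h2 /eqP h3; split.
case=> h2 h3; split; first exact: Q_SU2.
by rewrite Q01 Q10 h2 h3 oppr0; split; reflexivity.
Qed.

Lemma Pin_Q p : qn2 p = 1 -> (Pin2_std (Q p) <-> qP p).
Proof.
move=> hp; split.
  case=> [/(Spin_Q hp) h | [_ [h00 _]]]; first by left.
  move: h00; rewrite Q00 => /eqP; rewrite eq_complex /=.
  by case/andP => /eqP h0 /eqP h1; right.
case=> [h|[h0 h1]]; first by left; apply/(Spin_Q hp).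
right; split; first exact: Q_SU2.
by rewrite Q00 Q11 h0 h1 oppr0; split; reflexivity.
Qed.

Lemma SU2_of_Spin (M : 'M[C]_2) : Spin2_std M -> SU2 M. Proof. by case. Qed.
Lemma SU2_of_Pin (M : 'M[C]_2) : Pin2_std M -> SU2 M. Proof. by case=> [[]|[]]. Qed.

Lemma rep_isE (G : 'M[C]_2 -> Prop) (G1 : G 1%:M)
  (Gmul : forall A B, G A -> G B -> G (A *m B))
  (Ginv : forall A, G A -> G (invmx A)) (Gu : forall A, G A -> A \in unitmx)
  (X Y Z : 'M[C]_2) : X *m Y *m Z = 1%:M ->
  (rep_is G X Y Z <-> exists g, SU2 g /\ G (invmx g *m X *m g) /\ G (invmx g *m Y *m g)).
Proof.
move=> hXYZ; split.
  case=> g [hg hall]; exists g; split => //.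
  have [gq [eg hgq]] := SU2_Q hg.
  have ug : g \in unitmx by rewrite eg Q_unit.
  have key M : in_image X Y Z M -> G (invmx g *m M *m g).
    move=> /hall [N [GN ->]].
    by rewrite !mulmxA mulVmx // mul1mx -mulmxA mulVmx // mulmx1.
  by split; apply: key; constructor.
case=> g [hg [hX hY]]; exists g; split => //.
have [gq [eg hgq]] := SU2_Q hg.
have ug : g \in unitmx by rewrite eg Q_unit.
pose H M := G (invmx g *m M *m g).
have Hmul M N : H M -> H N -> H (M *m N).
  move=> hM hN; rewrite /H.
  have -> : invmx g *m (M *m N) *m g = (invmx g *m M *m g) *m (invmx g *m N *m g).
    by rewrite !mulmxA -[invmx g *m M *m g *m invmx g]mulmxA mulmxV // mulmx1.
  exact: Gmul.
have Hinv M : H M -> H (invmx M).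
  move=> hM; have uM : M \in unitmx.
    by have := Gu _ hM; rewrite !unitmx_mul => /andP [/andP [_ ->]].
  rewrite /H; have -> : invmx g *m invmx M *m g = invmx (invmx g *m M *m g).
    symmetry; apply: inv_uniq.
    rewrite !mulmxA -[invmx g *m M *m g *m invmx g]mulmxA mulmxV // mulmx1.
    by rewrite -[invmx g *m M *m invmx M]mulmxA mulmxV // mulmx1 mulVmx.
  exact: Ginv.
have hZ : Z = invmx (X *m Y) by symmetry; apply: inv_uniq.
have key M : in_image X Y Z M -> H M.
  elim => //.
  - by rewrite hZ; apply: Hinv; apply: Hmul.
  - by rewrite /H mulmx1 mulVmx.
  - by move=> A B _ hA _ hB; apply: Hmul.
  - by move=> A _ hA; apply: Hinv.
move=> M /key hM; exists (invmx g *m M *m g); split => //.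
by rewrite !mulmxA mulmxV // mul1mx -mulmxA mulmxV // mulmx1.
Qed.

Lemma qS_mul p q : qS p -> qS q -> qS (qmul p q).
Proof. case: p q => [a b c d] [e f g h]; rewrite /qS /qmul /= => -[-> ->] [-> ->]; split; ring. Qed.
Lemma qP_mul p q : qP p -> qP q -> qP (qmul p q).
Proof.
case: p q => [a b c d] [e f g h]; rewrite /qP /qS /qA /qmul /=.
case=> -[-> ->] [] [-> ->].
- by left; split; ring.
- by right; split; ring.
- by right; split; ring.
- by left; split; ring.
Qed.
Lemma qS_conj p : qS p -> qS (qconj p).
Proof. by case: p => a b c d; rewrite /qS /= => -[-> ->]; rewrite oppr0. Qed.
Lemma qP_conj p : qP p -> qP (qconj p).
Proof.
case: p => a b c d; rewrite /qP /qS /qA /= => -[[-> ->]|[-> ->]]; rewrite oppr0.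
  by left. by right.
Qed.

Lemma Spin_ex (M : 'M[C]_2) : Spin2_std M -> exists p, M = Q p /\ qn2 p = 1 /\ qS p.
Proof.
move=> h; have [p [ep hp]] := SU2_Q (SU2_of_Spin h).
by exists p; rewrite -(Spin_Q hp) -ep.
Qed.
Lemma Pin_ex (M : 'M[C]_2) : Pin2_std M -> exists p, M = Q p /\ qn2 p = 1 /\ qP p.
Proof.
move=> h; have [p [ep hp]] := SU2_Q (SU2_of_Pin h).
by exists p; rewrite -(Pin_Q hp) -ep.
Qed.

Lemma repS (X Y Z : 'M[C]_2) : SU2 X -> SU2 Y -> X *m Y *m Z = 1%:M ->
  forall x y, X = Q x -> Y = Q y -> qn2 x = 1 -> qn2 y = 1 ->
  (rep_is (@Spin2_std R) X Y Z <-> exists g, qn2 g = 1 /\ qS (cg g x) /\ qS (cg g y)).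
Proof.
move=> _ _ hXYZ x y eX eY hx hy; subst X Y; rewrite rep_isE //.
- split.
    case=> g [hg [h1 h2]]; have [gq [eg hgq]] := SU2_Q hg.
    move: h1 h2; rewrite eg Q_inv // !Q_mul -/(cg gq x) -/(cg gq y).
    rewrite (Spin_Q (etrans (cg_n2 x hgq) hx)) (Spin_Q (etrans (cg_n2 y hgq) hy)).
    by exists gq.
  case=> gq [hgq [h1 h2]]; exists (Q gq); split; first exact: Q_SU2.
  rewrite Q_inv // !Q_mul -/(cg gq x) -/(cg gq y).
  by rewrite (Spin_Q (etrans (cg_n2 x hgq) hx)) (Spin_Q (etrans (cg_n2 y hgq) hy)).
- by rewrite -Q_one; apply/(Spin_Q qn2_one); split.
- move=> A B /Spin_ex [p [-> [hp sp]]] /Spin_ex [q [-> [hq sq]]].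
  rewrite Q_mul; apply/Spin_Q; first by rewrite qn2_mul hp hq mulr1.
  exact: qS_mul.
- move=> A /Spin_ex [p [-> [hp sp]]]; rewrite Q_inv //.
  apply/Spin_Q; first by rewrite qn2_conj.
  exact: qS_conj.
- by move=> A /Spin_ex [p [-> [hp _]]]; apply: Q_unit.
Qed.

Lemma repP (X Y Z : 'M[C]_2) : SU2 X -> SU2 Y -> X *m Y *m Z = 1%:M ->
  forall x y, X = Q x -> Y = Q y -> qn2 x = 1 -> qn2 y = 1 ->
  (rep_is (@Pin2_std R) X Y Z <-> exists g, qn2 g = 1 /\ qP (cg g x) /\ qP (cg g y)).
Proof.
move=> _ _ hXYZ x y eX eY hx hy; subst X Y; rewrite rep_isE //.
- split.
    case=> g [hg [h1 h2]]; have [gq [eg hgq]] := SU2_Q hg.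
    move: h1 h2; rewrite eg Q_inv // !Q_mul -/(cg gq x) -/(cg gq y).
    rewrite (Pin_Q (etrans (cg_n2 x hgq) hx)) (Pin_Q (etrans (cg_n2 y hgq) hy)).
    by exists gq.
  case=> gq [hgq [h1 h2]]; exists (Q gq); split; first exact: Q_SU2.
  rewrite Q_inv // !Q_mul -/(cg gq x) -/(cg gq y).
  by rewrite (Pin_Q (etrans (cg_n2 x hgq) hx)) (Pin_Q (etrans (cg_n2 y hgq) hy)).
- by rewrite -Q_one; apply/(Pin_Q qn2_one); left; split.
- move=> A B /Pin_ex [p [-> [hp sp]]] /Pin_ex [q [-> [hq sq]]].
  rewrite Q_mul; apply/Pin_Q; first by rewrite qn2_mul hp hq mulr1.
  exact: qP_mul.
- move=> A /Pin_ex [p [-> [hp sp]]]; rewrite Q_inv //.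
  apply/Pin_Q; first by rewrite qn2_conj.
  exact: qP_conj.
- by move=> A /Pin_ex [p [-> [hp _]]]; apply: Q_unit.
Qed.

End Quat.

Local Open Scope complex_scope.
Unset Implicit Arguments.

Theorem proposition4p1 (R : realType) (X Y Z : 'M[R[i]]_2) :
  SU2 X -> SU2 Y -> SU2 Z -> X *m Y *m Z = 1%:M ->
  let a := \tr X in let b := \tr Y in let c := \tr Z in
  let k := a ^+ 2 + b ^+ 2 + c ^+ 2 - a * b * c - 4 in
  (rep_is (@Spin2_std R) X Y Z <-> k = 0) /\
  ((rep_is (@Pin2_std R) X Y Z /\ ~ rep_is (@Spin2_std R) X Y Z) <->
   (k <> 0 /\
    ((\tr X = 0 /\ \tr Y = 0) \/ (\tr X = 0 /\ \tr (X *m Y) = 0) \/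
     (\tr Y = 0 /\ \tr (X *m Y) = 0)))).
Proof.
move=> hX hY hZ hXYZ a b c k.
have [x [eX hx]] := SU2_Q hX.
have [y [eY hy]] := SU2_Q hY.
have hw : qn2 (qmul x y) = 1 by rewrite qn2_mul hx hy mulr1.
have eZ : Z = Q (qconj (qmul x y)).
  by rewrite -Q_inv // -Q_mul -eX -eY; symmetry; apply: inv_uniq.
have two0 (r : R) : (2 * r)%:C = 0 <-> r = 0.
  by rewrite cplx0; split => h; lra.
have ha : a = (2 * q0 x)%:C by rewrite /a eX tr_Q.
have hb : b = (2 * q0 y)%:C by rewrite /b eY tr_Q.
have hc : c = (2 * q0 (qmul x y))%:C by rewrite /c eZ tr_Q.
have hk : k = (kr x y)%:C.
  by rewrite /k ha hb hc /kr !(rmorphB, rmorphD, rmorphM, rmorphXn, rmorph_nat).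
have trX : \tr X = 0 <-> q0 x = 0 by rewrite eX tr_Q two0.
have trY : \tr Y = 0 <-> q0 y = 0 by rewrite eY tr_Q two0.
have trXY : \tr (X *m Y) = 0 <-> q0 (qmul x y) = 0 by rewrite eX eY Q_mul tr_Q two0.
have hS := repS hX hY hXYZ eX eY hx hy.
have hP := repP hX hY hXYZ eX eY hx hy.
have hk0 : k = 0 <-> crossz x y by rewrite hk cplx0 kr_iff.
have hSc : rep_is (@Spin2_std R) X Y Z <-> crossz x y.
  rewrite hS; split; first by case=> g [H [h1 h2]]; exact: QS_to H h1 h2.
  exact: QS_of.
split; first by rewrite hSc hk0.
rewrite hSc hP hk0; split.
  case=> -[g [H [h1 h2]]] hn; split => //.
  have t3 : two3 x y.
    apply: (QP_to H h1 h2) => hh; apply: hn; apply: QS_to H hh.1 hh.2.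
  case: t3 => [[e1 e2]|[[e1 e2]|[e1 e2]]].
  - by left; split; [apply/trX | apply/trY].
  - by right; left; split; [apply/trX | apply/trXY].
  - by right; right; split; [apply/trY | apply/trXY].
case=> hn ht; split => //.
apply: QP_of => //.
case: ht => [[e1 e2]|[[e1 e2]|[e1 e2]]].
- by left; split; [apply/trX | apply/trY].
- by right; left; split; [apply/trX | apply/trXY].
- by right; right; split; [apply/trY | apply/trXY].
Qed.
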